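(* Consider energy plus total flow time minimization with $\alpha=2$. Let $\mathcal{K}$ be a set of $n$ jobs, each of unit processing time, all released at the same time $t\ge0$. Then $$\tfrac43 n^{3/2}\le\mathtt{OPT}(\mathcal{K})\le\tfrac43 n^{3/2}+o(n^{3/2})\quad(n\to\infty).$$
   Context: Single machine; a feasible schedule assigns speeds $s_j(t)\ge0$ (zero before the release time $r_j$, $\int s_j=p_j$); energy $E(S)=\int(\sum_js_j(t))^\alpha dt$. Energy plus flow time: $\mathrm{cost}(S,\mathcal{J})=E(S)+\sum_{j}(c_j^S-r_j)$ with $c_j^S$ the completion time of $j$; $\mathtt{OPT}$ is the minimum cost over feasible schedules. *)

(* Defs.v *)
From HB Require Import structures.
From mathcomp Require Import all_boot all_order all_algebra.
From mathcomp Require Import all_classical all_reals all_analysis.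
Set Implicit Arguments. Unset Strict Implicit. Unset Printing Implicit Defensive.
Import Order.TTheory GRing.Theory Num.Theory.
Local Open Scope classical_set_scope.
Local Open Scope ring_scope.

Section Sched.
Variable R : realType.

(* A schedule for n jobs: s j t is the speed of job j at time t. *)
Definition feasible (n : nat) (r p : 'I_n -> R) (s : 'I_n -> R -> R) : Prop :=
  forall j : 'I_n,
    measurable_fun [set: R] (s j) /\
    (forall t, 0 <= s j t) /\
    (forall t, t < r j -> s j t = 0) /\
    (\int[@lebesgue_measure R]_(t in [set: R]) (s j t)%:E = (p j)%:E)%E.

Definition energy (n : nat) (alpha : R) (s : 'I_n -> R -> R) : \bar R :=
  (\int[@lebesgue_measure R]_(t in [set: R]) ((\sum_(j < n) s j t) `^ alpha)%:E)%E.

(* completion time: first time at which the processed work of j reaches p_j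
   (+oo if never reached) *)
Definition completion (n : nat) (p : 'I_n -> R) (s : 'I_n -> R -> R) (j : 'I_n)
  : \bar R :=
  ereal_inf [set u%:E | u in
     [set u : R | (\int[@lebesgue_measure R]_(t in `]-oo, u]) (s j t)%:E
                   = (p j)%:E)%E]].

Definition cost (n : nat) (alpha : R) (r p : 'I_n -> R) (s : 'I_n -> R -> R)
  : \bar R :=
  (energy alpha s + \sum_(j < n) (completion p s j - (r j)%:E))%E.

Definition OPT (n : nat) (alpha : R) (r p : 'I_n -> R) : \bar R :=
  ereal_inf [set cost alpha r p s | s in [set s | feasible r p s]].

End Sched.

(* Main.v *)
Require Import Defs.
From HB Require Import structures.
From mathcomp Require Import all_boot all_order all_algebra.
From mathcomp Require Import all_classical all_reals all_analysis.
From mathcomp Require Import ring lra zify.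
Import Order.TTheory GRing.Theory Num.Theory.
Import measurable_realfun.
Local Open Scope classical_set_scope.
Local Open Scope ring_scope.

Notation leb := (@lebesgue_measure _).

Lemma indic_ge0 (R : realType) (A : set R) x : 0 <= \1_A x :> R.
Proof. by rewrite indicE ler0n. Qed.

Lemma int_cindic (R : realType) (D A : set R) (c : R) :
  measurable D -> measurable A -> 0 <= c ->
  (\int[@lebesgue_measure R]_(x in D) (c * \1_A x)%:E =
   c%:E * @lebesgue_measure R (A `&` D))%E.
Proof.
move=> mD mA c0.
under eq_integral do rewrite EFinM.
rewrite ge0_integralZl_EFin //.
- congr (_ * _)%E; exact: integral_indic.

- by apply: (proj2 (measurable_EFinP _ _)); exact: measurable_indic.
Qed.

Lemma sqr_sum_disj (R : realType) n (x : 'I_n -> R) :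
  (forall j k, j != k -> x j * x k = 0) ->
  (\sum_j x j) ^+ 2 = \sum_j x j ^+ 2.
Proof.
move=> hd; rewrite expr2 mulr_suml; apply: eq_bigr => j _.
rewrite mulr_sumr (bigD1 j) //= big1 ?addr0 ?expr2 // => k hk.
by apply: hd; rewrite eq_sym.
Qed.

Lemma sum_tri (R : realType) (f : nat -> R) n :
  \sum_(0 <= j < n) \sum_(0 <= i < j.+1) f i =
  \sum_(0 <= i < n) (n - i)%:R * f i.
Proof.
elim: n => [|n IH]; first by rewrite !big_geq.
rewrite big_nat_recr //= IH [RHS]big_nat_recr //= subSnn mul1r.
rewrite big_nat_recr //= addrA; congr (_ + _).
rewrite -big_split /=; apply: eq_big_nat => i /andP[_ hi].
by rewrite subSn ?(ltnW hi) // -natr1 mulrDl mul1r.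
Qed.

Definition sig (R : realType) (n i : nat) : R := Num.sqrt (n - i)%:R.
Definition Tm (R : realType) (n k : nat) : R := \sum_(0 <= i < k) (sig R n i)^-1.
Definition sch (R : realType) (n : nat) (t : R) (j : 'I_n) (u : R) : R :=
  sig R n j * \1_(`[t + Tm R n j, t + Tm R n j.+1[) u.

Lemma sig_gt0 (R : realType) n i : (i < n)%N -> 0 < sig R n i.
Proof. by move=> h; rewrite /sig sqrtr_gt0 ltr0n subn_gt0. Qed.

Lemma sig_ge0 (R : realType) n i : 0 <= sig R n i.
Proof. exact: sqrtr_ge0. Qed.

Lemma TmS (R : realType) n k : Tm R n k.+1 = Tm R n k + (sig R n k)^-1.
Proof. by rewrite /Tm big_nat_recr. Qed.

Lemma Tm_ge0 (R : realType) n k : 0 <= Tm R n k.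
Proof. by apply: sumr_ge0 => i _; rewrite invr_ge0 sig_ge0. Qed.

Lemma Tm_mono (R : realType) n m k : (m <= k)%N -> Tm R n m <= Tm R n k.
Proof.
elim: k => [|k IH]; first by rewrite leqn0 => /eqP ->.
rewrite leq_eqVlt => /orP[/eqP -> //|]; rewrite ltnS => /IH h.
by rewrite TmS; apply: (le_trans h); rewrite lerDl invr_ge0 sig_ge0.
Qed.

Lemma sig_sqr (R : realType) n i : sig R n i ^+ 2 = (n - i)%:R.
Proof. by rewrite /sig sqr_sqrtr. Qed.

Lemma leb_itv (R : realType) (a b : R) : a < b ->
  @lebesgue_measure R `[a, b[ = (b - a)%:E.
Proof. by move=> h; rewrite lebesgue_measure_itv /= lte_fin h -EFinD. Qed.

Lemma sch_len (R : realType) n t (j : 'I_n) :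
  @lebesgue_measure R `[t + Tm R n j, t + Tm R n j.+1[ = ((sig R n j)^-1)%:E.
Proof.
rewrite leb_itv; last by rewrite TmS ltrD2l ltrDl invr_gt0 sig_gt0.
by congr (_%:E); rewrite TmS; ring.
Qed.

Lemma sch_feasible (R : realType) n (t : R) : 0 <= t ->
  feasible (fun _ : 'I_n => t) (fun _ => 1) (sch R n t).
Proof.
move=> t0 j; split; [|split; [|split]].
- apply: measurable_funM => //; exact: measurable_indic.
- by move=> u; apply: mulr_ge0; [exact: sig_ge0|exact: indic_ge0].
- move=> u hu; rewrite /sch indicE memNset ?mulr0 //= in_itv /=.
  move=> /andP[h _]; have := Tm_ge0 R n j; lra.
- rewrite /sch int_cindic // ?sig_ge0 // setIT sch_len -EFinM divff //.
  by rewrite gt_eqF // sig_gt0.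
Qed.

Lemma sch_comp (R : realType) n (t : R) (j : 'I_n) :
  (completion (fun _ : 'I_n => 1%R) (sch R n t) j <= (t + Tm R n j.+1)%:E)%E.
Proof.
apply: ereal_inf_lbound; exists (t + Tm R n j.+1) => //.
rewrite /= /sch int_cindic // ?sig_ge0 //.
rewrite setIidl ?sch_len -?EFinM ?divff ?gt_eqF ?sig_gt0 //.
by move=> x /=; rewrite !in_itv /= => /andP[_ /ltW].
Qed.

Lemma sch_disj (R : realType) n (t : R) (j k : 'I_n) u : j != k ->
  \1_(`[t + Tm R n j, t + Tm R n j.+1[) u *
  \1_(`[t + Tm R n k, t + Tm R n k.+1[) u = 0 :> R.
Proof.
wlog: j k / (j < k)%N.
  move=> H hjk; case: (ltngtP j k) => h; first exact: H.
    by rewrite mulrC H // eq_sym.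
  by move: hjk; rewrite (val_inj h) eqxx.
move=> hjk _; rewrite !indicE.
case: (boolP (u \in _)) => h1; last by rewrite mul0r.
case: (boolP (u \in _)) => h2; last by rewrite mulr0.
move: h1 h2; rewrite !inE /= !in_itv /= => /andP[_ h1] /andP[h2 _].
have := @Tm_mono R n _ _ hjk; lra.
Qed.

Lemma indic_sqr (R : realType) (A : set R) u : \1_A u ^+ 2 = \1_A u :> R.
Proof. by rewrite indicE; case: (u \in A); rewrite ?expr1n ?expr0n. Qed.

Lemma sch_energy (R : realType) n (t : R) :
  energy 2 (sch R n t) = (\sum_(j < n) sig R n j)%:E.
Proof.
rewrite /energy.
transitivity (\int[@lebesgue_measure R]_(u in [set: R])
   (\sum_(j < n) (sig R n j ^+ 2 * \1_(`[t + Tm R n j, t + Tm R n j.+1[) u)%:E))%E.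
  apply: eq_integral => u _; rewrite sumEFin; congr (_%:E).
  rewrite powR_mulrn; last by apply: sumr_ge0 => j _; apply: mulr_ge0;
    [exact: sig_ge0|exact: indic_ge0].
  rewrite sqr_sum_disj.
    by apply: eq_bigr => j _; rewrite /sch exprMn indic_sqr.
  by move=> j k hjk; rewrite /sch mulrACA sch_disj // mulr0.
rewrite ge0_integral_sum //.
- rewrite -sumEFin; apply: eq_bigr => j _.
  rewrite int_cindic // ?exprn_ge0 ?sig_ge0 // setIT sch_len -EFinM.
  by rewrite expr2 -mulrA divff ?mulr1 // gt_eqF // sig_gt0.
- move=> j; apply: (proj2 (measurable_EFinP _ _)).
  apply: measurable_funM => //; exact: measurable_indic.
- move=> j u _; rewrite lee_fin; apply: mulr_ge0;
    [exact: exprn_ge0 (sig_ge0 _ _ _)|exact: indic_ge0].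
Qed.

Lemma sum_Tm (R : realType) n :
  \sum_(j < n) Tm R n j.+1 = \sum_(j < n) sig R n j.
Proof.
rewrite -(big_mkord xpredT (fun j => Tm R n j.+1)) /Tm sum_tri.
rewrite -(big_mkord xpredT (fun j => sig R n j)).
apply: eq_big_nat => i /andP[_ hi].
by rewrite -sig_sqr expr2 -mulrA divff ?mulr1 // gt_eqF // sig_gt0.
Qed.

Lemma sch_cost (R : realType) n (t : R) :
  (cost 2 (fun _ : 'I_n => t) (fun _ => 1%R) (sch R n t) <=
   (2 * \sum_(j < n) sig R n j)%:E)%E.
Proof.
have -> : (2 * \sum_(j < n) sig R n j)%:E =
  ((\sum_(j < n) sig R n j)%:E + (\sum_(j < n) sig R n j)%:E)%E.
  by rewrite -EFinD; congr (_%:E); ring.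
rewrite /cost sch_energy leeD2l //.
rewrite -sum_Tm -sumEFin; apply: lee_sum => j _.
have := @sch_comp R n t j; rewrite EFinD.
case: (completion _ _ j) => [c| |] //=; rewrite ?lee_fin => h.
  lra.
by rewrite leNye.
Qed.
Lemma step_lb (R : realType) (m : R) : 0 <= m ->
  2/3 * ((m+1) * Num.sqrt (m+1)) <= 2/3 * (m * Num.sqrt m) + Num.sqrt (m+1).
Proof.
move=> m0.
have ha := sqrtr_ge0 m; have hb := sqrtr_ge0 (m+1).
have ea := sqr_sqrtr m0.
have eb : Num.sqrt (m+1) ^+ 2 = m + 1 by rewrite sqr_sqrtr //; lra.
set a := Num.sqrt m in ha ea *; set b := Num.sqrt (m+1) in hb eb *.
rewrite -ea; have eb2 : b^+2 = a^+2 + 1 by rewrite eb ea.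
have hab : a <= b by rewrite /a /b ler_wsqrtr //; lra.
have h1 : 0 <= (b - a)^+2 * (b + 2 * a) by apply: mulr_ge0; [exact: sqr_ge0|lra].
nra.
Qed.

Lemma step_ub (R : realType) (m : R) : 0 <= m ->
  2/3 * (m * Num.sqrt m) + Num.sqrt m <= 2/3 * ((m+1) * Num.sqrt (m+1)).
Proof.
move=> m0.
have ha := sqrtr_ge0 m; have hb := sqrtr_ge0 (m+1).
have ea := sqr_sqrtr m0.
have eb : Num.sqrt (m+1) ^+ 2 = m + 1 by rewrite sqr_sqrtr //; lra.
set a := Num.sqrt m in ha ea *; set b := Num.sqrt (m+1) in hb eb *.
rewrite -ea; have eb2 : b^+2 = a^+2 + 1 by rewrite eb ea.
have hab : a <= b by rewrite /a /b ler_wsqrtr //; lra.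
have h1 : 0 <= (b - a)^+2 * (2 * b + a) by apply: mulr_ge0; [exact: sqr_ge0|lra].
nra.
Qed.

Lemma sum_sqrt_ub (R : realType) m :
  \sum_(j < m) Num.sqrt (j.+1%:R : R) <=
  2/3 * (m%:R * Num.sqrt (m%:R : R)) + Num.sqrt (m%:R : R).
Proof.
elim: m => [|m IH]; first by rewrite big_ord0 mul0r mulr0 sqrtr0 addr0.
rewrite big_ord_recr /= -natr1.
have := @step_ub R m%:R (ler0n _ _); move: IH; lra.
Qed.

Lemma sum_sig_ub (R : realType) n :
  \sum_(j < n) sig R n j <= 2/3 * (n%:R * Num.sqrt (n%:R : R)) + Num.sqrt (n%:R : R).
Proof.
rewrite (reindex_inj rev_ord_inj) /=.
rewrite (eq_bigr (fun j : 'I_n => Num.sqrt (j.+1%:R : R))); first exact: sum_sqrt_ub.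
move=> j _; rewrite /sig; congr (Num.sqrt _%:R).
by have := ltn_ord j; lia.
Qed.

Lemma pow32 (R : realType) (x : R) : 0 <= x -> x `^ (3/2) = x * Num.sqrt x.
Proof.
move=> x0; have -> : (3/2 : R) = 1 + 2^-1 by field.
rewrite powRD ?powRr1 ?powR12_sqrt //.
apply/implyP => /eqP h; exfalso; move: h; lra.
Qed.

Lemma OPT_ub (R : realType) n (t : R) : 0 <= t ->
  (OPT 2 (fun _ : 'I_n => t) (fun _ => 1%R) <=
   (4/3 * (n%:R * Num.sqrt (n%:R : R)) + 2 * Num.sqrt (n%:R : R))%:E)%E.
Proof.
move=> t0; apply: le_trans (_ : (cost 2 (fun _ : 'I_n => t) (fun _ => 1%R) (sch R n t) <= _)%E).
  by apply: ereal_inf_lbound; exists (sch R n t) => //; exact: sch_feasible.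
apply: le_trans (sch_cost _ _ _) _; rewrite lee_fin.
have := sum_sig_ub R n; lra.
Qed.

Lemma comp_ge (R : realType) n (t : R) (s : 'I_n -> R -> R) :
  feasible (fun _ => t) (fun _ => 1%R) s ->
  forall j, (t%:E <= completion (fun _ => 1%R) s j)%E.
Proof.
move=> hs j; apply/ereal_infP => _ [u hu <-]; rewrite lee_fin leNgt.
apply/negP => hut; move: hu => /=.
rewrite integral0_eq.
  by move=> h; have := congr1 fine h => /=; lra.
move=> x; rewrite /= in_itv /= => hx.
have [_ [_ [h _]]] := hs j; rewrite h //; exact: le_lt_trans hut.
Qed.

Lemma energy_sq (R : realType) n (s : 'I_n -> R -> R) :
  (forall j u, 0 <= s j u) ->
  energy 2 s = (\int[@lebesgue_measure R]_(u in [set: R])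
                  ((\sum_(j < n) s j u) ^+ 2)%:E)%E.
Proof.
move=> h; apply: eq_integral => u _; rewrite powR_mulrn //.
by apply: sumr_ge0 => j _.
Qed.

Lemma comb_sorted (R : realType) (s : seq R) : sorted <=%R s ->
  2/3 * ((size s)%:R * Num.sqrt ((size s)%:R : R)) <=
  \sum_(x <- s) Num.sqrt (\sum_(y <- s) ((x <= y)%R)%:R).
Proof.
elim: s => [|x s IH] /=; first by rewrite big_nil mul0r mulr0.
move=> hp.
have hs : sorted <=%R s by exact: path_sorted hp.
have hall := order_path_min (@le_trans _ R) hp.
rewrite big_cons big_cons lexx.
have -> : \sum_(y <- s) ((x <= y)%R)%:R = (size s)%:R :> R.
  elim: s {IH hp hs} hall => [|z s IHs] /=; first by rewrite big_nil.
  by rewrite big_cons; case/andP=> -> /IHs ->; rewrite -natr1 addrC.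
under [X in _ <= _ + X]eq_bigr do rewrite big_cons.
have h2 : \sum_(z <- s) Num.sqrt (\sum_(y <- s) (((z <= y)%R)%:R : R)) <=
          \sum_(z <- s) Num.sqrt (((z <= x)%R)%:R + \sum_(y <- s) (((z <= y)%R)%:R : R)).
  apply: ler_sum => z _; apply: ler_wsqrtr; rewrite lerDr; by case: (z <= x).
have := @step_lb R _ (ler0n R (size s)).
have -> : (true%:R + (size s)%:R : R) = (size s)%:R + 1 by rewrite addrC.
have -> : ((size s).+1%:R : R) = (size s)%:R + 1 by rewrite -natr1.
move: (IH hs); lra.
Qed.

Lemma comb (R : realType) (s : seq R) :
  2/3 * ((size s)%:R * Num.sqrt ((size s)%:R : R)) <=
  \sum_(x <- s) Num.sqrt (\sum_(y <- s) ((x <= y)%R)%:R).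
Proof.
have hp : perm_eq (sort <=%R s) s by rewrite perm_sort.
have := @comb_sorted R _ (sort_sorted (@le_total _ R) s).
rewrite (perm_size hp) (perm_big _ hp).
by under eq_bigr do rewrite (perm_big _ hp).
Qed.


Lemma comb_ord (R : realType) n (c : 'I_n -> R) :
  2/3 * (n%:R * Num.sqrt (n%:R : R)) <=
  \sum_(j < n) Num.sqrt (\sum_(i < n) ((c j <= c i)%R)%:R).
Proof.
have := @comb R (map c (enum 'I_n)).
rewrite size_map size_enum_ord big_map enumT.
under eq_bigr do rewrite big_map.
by rewrite unlock.
Qed.

Lemma main_lb (R : realType) n (t : R) (s : 'I_n -> R -> R) (c : 'I_n -> R) (d : R) :
  feasible (fun _ => t) (fun _ => 1%R) s ->
  (forall j, completion (fun _ => 1%R) s j = (c j)%:E) -> 0 < d ->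
  ((4/3 * (n%:R * Num.sqrt (n%:R : R)))%:E <=
   energy 2 s + \sum_(j < n) ((c j + d - t)%:E))%E.
Proof.
move=> hs hc d0.
have hs0 : forall j u, 0 <= s j u by move=> j u; have [_ [h _]] := hs j.
have hsm : forall j, measurable_fun [set: R] (s j) by move=> j; have [h _] := hs j.
have hst : forall j u, u < t -> s j u = 0 by move=> j u; have [_ [_ [h _]]] := hs j; exact: h.
have hct : forall j, t <= c j by move=> j; have := comp_ge _ _ _ _ hs j; rewrite hc lee_fin.
pose N u := \sum_(i < n) \1_(`[t, c i + d]) u : R.
have N0 : forall u, 0 <= N u by move=> u; apply: sumr_ge0 => i _; exact: indic_ge0.
have mN : measurable_fun [set: R] N.
  by apply: measurable_sum => i; exact: measurable_indic.
have msN : measurable_fun [set: R] (fun u => Num.sqrt (N u)).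
  exact: (measurableT_comp (continuous_measurable_fun (@sqrt_continuous R)) mN).
pose S u := \sum_(j < n) s j u.
have mS : measurable_fun [set: R] S by apply: measurable_sum.
have hflow : \sum_(j < n) ((c j + d - t)%:E) =
    (\int[@lebesgue_measure R]_(u in [set: R]) (N u)%:E)%E.
  transitivity (\int[@lebesgue_measure R]_(u in [set: R])
     (\sum_(i < n) (\1_(`[t, c i + d]) u)%:E))%E; last first.
    by apply: eq_integral => u _; rewrite sumEFin.
  rewrite ge0_integral_sum //.
  - apply: eq_bigr => i _; rewrite integral_indic // setIT.
    apply: esym; apply: (eq_trans (lebesgue_measure_itv _)) => /=.
    rewrite lte_fin ifT -?EFinD //; have := hct i; lra.
  - by move=> i; apply: (proj2 (measurable_EFinP _ _)); exact: measurable_indic.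
rewrite hflow (energy_sq _ _ _ hs0) -ge0_integralD //; last 4 first.
- by move=> u _; rewrite lee_fin sqr_ge0.
- apply: (proj2 (measurable_EFinP _ _)).
  exact: (measurable_funX 2 mS).
- by move=> u _; rewrite lee_fin.
- by apply: (proj2 (measurable_EFinP _ _)).
have mSq : measurable_fun [set: R] (fun u => 2 * S u * Num.sqrt (N u)).
  by apply: measurable_funM => //; apply: measurable_funM.
apply: (@le_trans _ _ (\int[@lebesgue_measure R]_(u in [set: R])
   (2 * S u * Num.sqrt (N u))%:E)%E); last first.
  apply: ge0_le_integral => //.
  - move=> u _; rewrite lee_fin; apply: mulr_ge0 => //; apply: mulr_ge0 => //.
    by apply: sumr_ge0 => j _.
  - by apply: (proj2 (measurable_EFinP _ _)).
  - apply: (proj2 (measurable_EFinP _ _)).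
    by apply: measurable_funD => //; exact: (measurable_funX 2 mS).
  - move=> u _; rewrite -EFinD lee_fin.
    have q := sqr_sqrtr (N0 u); rewrite -/(S u).
    have := sqr_ge0 (S u - Num.sqrt (N u)); nra.
have -> : (\int[@lebesgue_measure R]_(u in [set: R]) (2 * S u * Num.sqrt (N u))%:E =
  \int[@lebesgue_measure R]_(u in [set: R])
    (\sum_(j < n) (2 * s j u * Num.sqrt (N u))%:E))%E.
  by apply: eq_integral => u _; rewrite sumEFin /S mulr_sumr mulr_suml.
rewrite ge0_integral_sum //; first last.
- move=> j u _; rewrite lee_fin; apply: mulr_ge0 => //; exact: mulr_ge0.
- move=> j.
  have mj : measurable_fun [set: R] (fun u => 2 * s j u * Num.sqrt (N u)).
    by apply: measurable_funM => //; apply: measurable_funM.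
  by apply: (proj2 (measurable_EFinP _ _)).
pose M j := \sum_(i < n) ((c j <= c i)%R)%:R : R.
apply: (@le_trans _ _ (\sum_(j < n) (2 * Num.sqrt (M j))%:E)%E).
  rewrite sumEFin lee_fin -mulr_sumr.
  have := comb_ord R n c; rewrite /M; lra.
apply: lee_sum => j _.
pose D := [set` `]-oo, c j + d]] : set R.
have mD : measurable D by exact: measurable_itv.
have msj : measurable_fun D (fun x => (s j x)%:E).
  apply: (proj2 (measurable_EFinP _ _)).
  exact: (measurable_funS measurableT (@subsetT _ D) (hsm j)).
have h1 : (1 <= \int[@lebesgue_measure R]_(x in D) (s j x)%:E)%E.
  have : completion (fun _ => 1%R) s j \is a fin_num by rewrite hc.
  move/(lb_ereal_inf_adherent d0) => [_ [u hu <-]].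
  rewrite -/(completion _ s j) hc -EFinD lte_fin => hu'.
  rewrite -[X in (X <= _)%E]hu.
  apply: ge0_subset_integral => //.
  - by move=> x _; rewrite lee_fin.
  - move=> x /=; rewrite !in_itv /= => hx; rewrite /D /= in_itv /=; lra.
have mj : measurable_fun [set: R] (fun u => 2 * s j u * Num.sqrt (N u)).
  by apply: measurable_funM => //; apply: measurable_funM.
apply: (@le_trans _ _ (\int[@lebesgue_measure R]_(x in D)
   (2 * s j x * Num.sqrt (N x))%:E)%E); last first.
  apply: ge0_subset_integral => //.
  - by apply: (proj2 (measurable_EFinP _ _)).
  - move=> x _; rewrite lee_fin; apply: mulr_ge0 => //; exact: mulr_ge0.
apply: (@le_trans _ _ (\int[@lebesgue_measure R]_(x in D)
   ((2 * Num.sqrt (M j))%:E * (s j x)%:E))%E); last first.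
  apply: ge0_le_integral => //.
  - move=> x _; rewrite -EFinM lee_fin.
    have := hs0 j x; have := sqrtr_ge0 (M j); nra.
  - by apply: emeasurable_funM => //; exact: measurable_cst.
  - apply: (proj2 (measurable_EFinP _ _)).
    exact: (measurable_funS measurableT (@subsetT _ D) mj).
  move=> x; rewrite /D /= in_itv /= => hx; rewrite -EFinM lee_fin.
  have [hxt|hxt] := ltP x t; first by rewrite hst // !(mulr0, mul0r).
  have hMN : Num.sqrt (M j) <= Num.sqrt (N x).
    apply: ler_wsqrtr; apply: ler_sum => i _.
    case: (boolP (c j <= c i)%R) => hji; last exact: indic_ge0.
    rewrite indicE mem_set //= in_itv /=; apply/andP; split => //; lra.
  have := hs0 j x; nra.
rewrite ge0_integralZl //; last by move=> x _; rewrite lee_fin.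
rewrite -[X in (X <= _)%E]mule1; apply: lee_pmul => //.

Qed.

Lemma OPT_lb (R : realType) n (t : R) :
  ((4/3 * (n%:R * Num.sqrt (n%:R : R)))%:E <=
   OPT 2 (fun _ : 'I_n => t) (fun _ => 1%R))%E.
Proof.
apply/ereal_infP => _ [s hs <-].
have hge := comp_ge _ _ _ _ hs.
have hE : (0 <= energy 2 s)%E.
  apply: integral_ge0 => u _; rewrite lee_fin powR_ge0 //.
case: (pselect (exists j, completion (fun _ => 1%R) s j = +oo%E)) => [[j hj]|hno].
  rewrite /cost.
  have -> : (\sum_(j < n) (completion (fun _ => 1%R) s j - t%:E) = +oo)%E.
    apply/esum_eqyP.
      move=> i _; have := hge i.
      by case: (completion _ _ i).
    by exists j; split => //; rewrite hj.
  by rewrite addey ?leey // gt_eqF // (lt_le_trans _ hE) // ltNy0.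
pose c j := fine (completion (fun _ => 1%R) s j).
have hc : forall j, completion (fun _ => 1%R) s j = (c j)%:E.
  move=> j; rewrite /c fineK //; have := hge j.
  case E: (completion _ _ j) => [x| |] //= _; exfalso; apply: hno; by exists j.
apply/lee_addgt0Pr => e e0.
have hn : 0 < n%:R + 1 :> R by rewrite ltr_pwDr // ler0n.
have d0 : 0 < e / (n%:R + 1) by rewrite divr_gt0.
apply: le_trans (main_lb _ _ _ _ _ _ hs hc d0) _.
rewrite /cost -(addeA (energy 2 s)) leeD2l //.
under [X in (_ <= X + _)%E]eq_bigr do rewrite hc -EFinB.
rewrite !sumEFin -EFinD lee_fin.
under eq_bigr do rewrite -addrA (addrC (e / _)) addrA.
rewrite big_split /= sumr_const card_ord lerD2l.
rewrite -[_ *+ n]mulr_natr.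
have -> : e / (n%:R + 1) * n%:R = e * (n%:R / (n%:R + 1)) by rewrite mulrAC mulrA.
have : n%:R / (n%:R + 1) <= 1 :> R by rewrite ler_pdivrMr //; lra.
move: e0; nra.
Qed.

Theorem lemma4 (R : realType) (t : R) (ht : 0 <= t) :
  (forall n : nat,
     Order.le ((4 / 3 * (n%:R `^ (3 / 2)))%:E)
              (OPT 2 (fun _ : 'I_n => t) (fun _ : 'I_n => 1))) /\
  (forall eps : R, 0 < eps ->
     exists N : nat, forall n : nat, (N <= n)%N ->
       Order.le (OPT 2 (fun _ : 'I_n => t) (fun _ : 'I_n => 1))
                ((4 / 3 * (n%:R `^ (3 / 2)) + eps * (n%:R `^ (3 / 2)))%:E)).
Proof.
split.
  by move=> n; rewrite pow32 //; exact: OPT_lb.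
move=> eps e0.
have h2 : 0 <= 2 / eps by rewrite divr_ge0 // ltW.
exists (Num.Def.archi_bound (2 / eps)) => n hn.
apply: le_trans (OPT_ub _ _ _ ht) _.
rewrite pow32 // lee_fin lerD2l.
have hN := archi_boundP h2.
have : (Num.Def.archi_bound (2 / eps))%:R <= n%:R :> R by rewrite ler_nat.
move=> hNn.
have hen : 2 <= eps * n%:R.
  have : 2 / eps < n%:R by apply: lt_le_trans hNn.
  by rewrite ltr_pdivrMr // mulrC => /ltW.
have := sqrtr_ge0 (n%:R : R); nra.
Qed.
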